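(* Let $q$ be an odd prime power and let $r$ be a divisor of $q-1$ such that $1<r<\frac{\sqrt{q}}{2}-\frac{2\log_2 q+1}{4}$. Then there exists a $2$-blocking set of the Hermitian curve $\mathcal{H}_q$ of size $k$ for some integer $k$ satisfying $$\frac{q^3-3q^2-2q}{r}+2q^2-q+2-2\lceil\log_2 q+1\rceil\leq k\leq\frac{q^3-3q^2-2q}{r}+2q^2+q+2+2\lceil\log_2 q+1\rceil.$$
   Context: $\mathcal{H}_q$ is the Hermitian curve in the Desarguesian projective plane $\mathrm{PG}(2,q^2)$, the set of points satisfying $X_2X_0^q+X_2^qX_0+X_1^{q+1}=0$; it has $q^3+1$ points, there is a unique tangent line to $\mathcal{H}_q$ at each of its points, and every other line meets $\mathcal{H}_q$ in exactly $q+1$ points ($(q+1)$-secants). A pointset $\mathcal{D}\subset\mathcal{H}_q$ is a $2$-blocking set of $\mathcal{H}_q$ if every $(q+1)$-secant of $\mathcal{H}_q$ contains at least $2$ points of $\mathcal{D}$. *)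

(* Defs.v *)
From HB Require Import structures.
From mathcomp Require Import all_boot all_order all_algebra all_field.
From mathcomp Require Import all_classical all_reals all_analysis.
Set Implicit Arguments. Unset Strict Implicit. Unset Printing Implicit Defensive.
Import Order.TTheory GRing.Theory Num.Theory.
Local Open Scope ring_scope.

(* Homogeneous coordinates (X0, X1, X2) of PG(2,F), stored as ((X0,X1),X2),
   normalized so that the first nonzero coordinate equals 1.  Each point of
   PG(2,F) has exactly one normalized representative. *)
Definition normalized (F : fieldType) (x : F * F * F) : bool :=
  let: (x0, x1, x2) := x in
  [|| x0 == 1, (x0 == 0) && (x1 == 1) | [&& x0 == 0, x1 == 0 & x2 == 1]].

Definition proj_point (F : finFieldType) := {x : F * F * F | normalized x}.

Definition proj_line (F : finFieldType) := {a : F * F * F | normalized a}.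

Definition incident (F : finFieldType) (l : proj_line F) (P : proj_point F) : bool :=
  let: (a0, a1, a2) := val l in
  let: (x0, x1, x2) := val P in
  a0 * x0 + a1 * x1 + a2 * x2 == 0.

Definition points_on (F : finFieldType) (l : proj_line F) : {set proj_point F} :=
  [set P | incident l P].

Definition hermitian_curve (F : finFieldType) (q : nat) : {set proj_point F} :=
  [set P | let: (x0, x1, x2) := val P in
           x2 * x0 ^+ q + x2 ^+ q * x0 + x1 ^+ q.+1 == 0].

Definition secant_line (F : finFieldType) (q : nat) (l : proj_line F) : bool :=
  #|hermitian_curve F q :&: points_on l| == q.+1.

Definition two_blocking_set (F : finFieldType) (q : nat) (D : {set proj_point F}) : Prop :=
  D \subset hermitian_curve F q /\
  forall l : proj_line F, secant_line q l -> (2 <= #|D :&: points_on l|)%N.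

Definition log2 (R : realType) (x : R) : R := ln x / ln 2.

(* Main.v *)
Require Import Defs.
From HB Require Import structures.
From mathcomp Require Import all_boot all_order all_algebra all_field.
From mathcomp Require Import ring lra zify.
Import Order.TTheory GRing.Theory Num.Theory.
Local Open Scope ring_scope.

Module HC.
Set Implicit Arguments. Unset Strict Implicit. Unset Printing Implicit Defensive.


Section Alg.
Variables (F : finFieldType) (q : nat).
Hypothesis Hadd : forall x y : F, (x + y) ^+ q = x ^+ q + y ^+ q.
Hypothesis Hinv : forall x : F, (x ^+ q) ^+ q = x.
Hypothesis Hq2 : (2 <= q)%N.
Hypothesis HF : #|F| = (q * q)%N.

Lemma frob0 : (0 : F) ^+ q = 0.
Proof. by rewrite expr0n; case: q Hq2. Qed.

Lemma frobN (x : F) : (- x) ^+ q = - x ^+ q.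
Proof.
have h := Hadd x (- x); rewrite subrr frob0 in h.
by apply: (addrI (x ^+ q)); rewrite -h subrr.
Qed.

Lemma frobB (x y : F) : (x - y) ^+ q = x ^+ q - y ^+ q.
Proof. by rewrite Hadd frobN. Qed.

Lemma card_roots_le (p : {poly F}) : p != 0 -> (#|[set x | root p x]| <= (size p).-1)%N.
Proof.
move=> p0; rewrite cardE -ltnS; apply: leq_trans (leqSpred _).
apply: max_poly_roots => //.
  by apply/allP => x; rewrite mem_enum inE.
exact: enum_uniq.
Qed.

Definition Ks := [set t : F | t ^+ q == t].
Definition Kern := [set s : F | s ^+ q + s == 0].
Definition Tr (x : F) := x + x ^+ q.

Lemma size_XqX (c : F) : size ('X^q + c *: 'X : {poly F}) = q.+1.
Proof.
rewrite size_addl ?size_polyXn //.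
apply: (leq_ltn_trans (size_scale_leq _ _)); rewrite size_polyX; exact: Hq2.
Qed.

Lemma card_Ks : (#|Ks| <= q)%N.
Proof.
have p0 : ('X^q + (-1) *: 'X : {poly F}) != 0.
  by rewrite -size_poly_eq0 size_XqX.
have h := card_roots_le p0; rewrite size_XqX /= in h; apply: (leq_trans _ h).
apply: subset_leq_card; apply/subsetP => t; rewrite !inE => /eqP ht.
by rewrite /root !hornerE ht mulN1r subrr.
Qed.

Lemma card_Kern : (#|Kern| <= q)%N.
Proof.
have p0 : ('X^q + 1 *: 'X : {poly F}) != 0.
  by rewrite -size_poly_eq0 size_XqX.
have h := card_roots_le p0; rewrite size_XqX /= in h; apply: (leq_trans _ h).
apply: subset_leq_card; apply/subsetP => t; rewrite !inE => /eqP ht.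
by rewrite /root !hornerE ?mul1r ht.
Qed.

Lemma TrD x y : Tr (x + y) = Tr x + Tr y.
Proof. by rewrite /Tr Hadd addrACA. Qed.
Lemma TrB x y : Tr (x - y) = Tr x - Tr y.
Proof. by rewrite /Tr frobB opprD addrACA. Qed.

Lemma Tr_Ks x : Tr x \in Ks.
Proof. by rewrite inE /Tr Hadd Hinv addrC. Qed.

Definition preTr (k : F) : F := odflt 0 [pick y | Tr y == k].

Lemma preTrP k : k \in [set Tr x | x in setT] -> Tr (preTr k) = k.
Proof.
move=> /imsetP [x _ ->]; rewrite /preTr; case: pickP => [y /eqP //|/(_ x)].
by rewrite eqxx.
Qed.

Lemma card_F_le : (#|F| <= #|[set Tr x | x in setT]| * #|Kern|)%N.
Proof.
set A := [set Tr x | x in setT].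
pose f (x : F) := (Tr x, x - preTr (Tr x)).
have finj : injective f.
  by move=> x y [e1]; rewrite /f e1 => /addIr.
rewrite -cardsX -cardsT -(card_imset setT finj).
apply: subset_leq_card; apply/subsetP => _ /imsetP [x _ ->].
rewrite inE /= imset_f ?inE //=.
have := TrB x (preTr (Tr x)); rewrite preTrP ?imset_f ?inE // subrr /Tr.
by rewrite addrC => ->.
Qed.

Lemma card_Ks_eq : #|Ks| = q.
Proof.
have h1 : [set Tr x | x in setT] \subset Ks.
  by apply/subsetP => _ /imsetP [x _ ->]; apply: Tr_Ks.
have := card_F_le; rewrite HF => h.
apply/eqP; rewrite eqn_leq card_Ks /=.
have h2 := subset_leq_card h1.
have h3 := card_Kern.
have h4 : (q * q <= #|Ks| * q)%N.
  apply: leq_trans h _; apply: leq_mul => //.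
by rewrite leq_pmul2r in h4 => //; case: q Hq2.
Qed.

Lemma card_Kern_eq : #|Kern| = q.
Proof.
have h1 : [set Tr x | x in setT] \subset Ks.
  by apply/subsetP => _ /imsetP [x _ ->]; apply: Tr_Ks.
have := card_F_le; rewrite HF => h.
apply/eqP; rewrite eqn_leq card_Kern /=.
have h2 := subset_leq_card h1; rewrite card_Ks_eq in h2.
have h4 : (q * q <= q * #|Kern|)%N.
  apply: leq_trans h _; apply: leq_mul => //.
by rewrite leq_pmul2l in h4 => //; case: q Hq2.
Qed.

Lemma Tr_onto k : k \in Ks -> exists x, Tr x = k.
Proof.
move=> hk.
have h1 : [set Tr x | x in setT] \subset Ks.
  by apply/subsetP => _ /imsetP [x _ ->]; apply: Tr_Ks.
have e : [set Tr x | x in setT] = Ks.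
  apply/eqP; rewrite eqEcard h1 card_Ks_eq.
  have := card_F_le; rewrite HF card_Kern_eq => h.
  by rewrite leq_pmul2r in h => //; case: q Hq2.
by move: hk; rewrite -e => /imsetP [x _ ->]; exists x.
Qed.

End Alg.


Section Pts.
Variables (F : finFieldType) (q : nat).
Hypothesis Hadd : forall x y : F, (x + y) ^+ q = x ^+ q + y ^+ q.
Hypothesis Hinv : forall x : F, (x ^+ q) ^+ q = x.
Hypothesis Hq2 : (2 <= q)%N.
Hypothesis HF : #|F| = (q * q)%N.

Lemma norm_aff (x1 x2 : F) : normalized (1, x1, x2).
Proof. by rewrite /normalized eqxx. Qed.

Lemma norm_inf : normalized ((0 : F), (0 : F), (1 : F)).
Proof. by rewrite /normalized eq_sym oner_eq0 /= !eqxx. Qed.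

Definition mkpt (x1 x2 : F) : proj_point F := exist _ (1, x1, x2) (norm_aff x1 x2).
Definition inf : proj_point F := exist _ (0, 0, 1) norm_inf.

Local Notation H := (hermitian_curve F q).

Lemma mkpt_inj x1 x2 y1 y2 : mkpt x1 x2 = mkpt y1 y2 -> x1 = y1 /\ x2 = y2.
Proof. by case. Qed.

Lemma mkpt_H x1 x2 : (mkpt x1 x2 \in H) = (x2 + x2 ^+ q + x1 ^+ q.+1 == 0).
Proof. by rewrite inE /= expr1n !mulr1. Qed.

Lemma inf_H : inf \in H.
Proof.
have q0 : (q == 0)%N = false by case: q Hq2.
by rewrite inE /= !expr0n /= q0 !(mulr0, mul0r, addr0).
Qed.

Lemma mkpt_neq_inf x1 x2 : mkpt x1 x2 != inf.
Proof. by apply/eqP => -[] /eqP; rewrite oner_eq0. Qed.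

Lemma normP (x : F * F * F) : normalized x ->
  [\/ x.1.1 = 1, x.1.1 = 0 /\ x.1.2 = 1 | x = (0, 0, 1)].
Proof.
case: x => [[x0 x1] x2] /=; rewrite /normalized.
case/or3P => [/eqP -> | /andP [/eqP -> /eqP ->] | /and3P [/eqP -> /eqP -> /eqP ->]].
- by apply: Or31.
- by apply: Or32.
- by apply: Or33.
Qed.

Lemma pointP (P : proj_point F) :
  [\/ exists x1 x2, P = mkpt x1 x2, exists x2, val P = (0, 1, x2) | P = inf].
Proof.
case: P => [[[x0 x1] x2] hn].
case: (normP hn) => /= [e | [e0 e1] | e].
- apply: Or31; exists x1, x2; apply: val_inj => /=; by rewrite e.
- by apply: Or32; exists x2; rewrite e0 e1.
- by apply: Or33; apply: val_inj; rewrite /= e.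
Qed.

Lemma notH01 (P : proj_point F) x2 : val P = (0, 1, x2) -> P \notin H.
Proof.
have q0 : (q == 0)%N = false by case: q Hq2.
move=> e; rewrite inE e /= expr1n expr0n q0.
by rewrite !(mulr0, add0r) oner_eq0.
Qed.

Lemma normN (x : F) : x ^+ q.+1 \in Ks F q.
Proof. by rewrite inE exprS exprMn Hinv mulrC. Qed.

Definition sec (x1 : F) : F := odflt 0 [pick y | Tr q y == - x1 ^+ q.+1].

Lemma secP x1 : Tr q (sec x1) = - x1 ^+ q.+1.
Proof.
have hk : - x1 ^+ q.+1 \in Ks F q.
  have := normN x1; rewrite !inE (frobN Hadd Hq2) => /eqP ->; by [].
have [y hy] := Tr_onto Hadd Hinv Hq2 HF hk.
rewrite /sec; case: pickP => [z /eqP //|/(_ y)].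
by rewrite hy eqxx.
Qed.

Definition secpt x1 := mkpt x1 (sec x1).

Lemma secpt_H x1 : secpt x1 \in H.
Proof. by rewrite mkpt_H; have := secP x1; rewrite /Tr => ->; rewrite addNr. Qed.

Definition Piece (S : {set F}) : {set proj_point F} :=
  [set P in H | ((val P).1.1 == 1) && ((val P).1.2 \in S)].

Lemma card_Piece S : (#|Piece S| <= #|S| * q)%N.
Proof.
pose g (P : proj_point F) := ((val P).1.2, (val P).2 - sec (val P).1.2).
have ginj : {in Piece S &, injective g}.
  move=> [[[a0 a1] a2] ha] [[[b0 b1] b2] hb]; rewrite !inE /= => /and3P [_ /eqP e0 _] /and3P [_ /eqP e1 _].
  rewrite /g /= => -[e2 e3]; apply: val_inj => /=; rewrite e2 in e3; move/addIr: e3 => e3.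
  by rewrite e0 e1 e2 e3.
rewrite -(card_in_imset ginj) -(card_Kern_eq Hadd Hinv Hq2 HF) -cardsX.
apply: subset_leq_card; apply/subsetP => _ /imsetP [[[[a0 a1] a2] ha] hP ->].
move: hP; rewrite !inE /= => /and3P [hH /eqP e0 hS]; rewrite hS /=.
move: hH; rewrite e0 expr1n !mulr1 => /eqP hH.
have := TrB Hadd Hq2 (a2) (sec a1); rewrite secP /Tr.
have -> : a2 + a2 ^+ q = - a1 ^+ q.+1 by apply/eqP; rewrite -addr_eq0 hH.
by rewrite subrr addrC => <-.
Qed.

End Pts.


Section Lines.
Variables (F : finFieldType) (q : nat).
Hypothesis Hadd : forall x y : F, (x + y) ^+ q = x ^+ q + y ^+ q.
Hypothesis Hinv : forall x : F, (x ^+ q) ^+ q = x.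
Hypothesis Hq2 : (2 <= q)%N.
Hypothesis HF : #|F| = (q * q)%N.

Local Notation H := (hermitian_curve F q).
Local Notation mkpt := (@mkpt F).

Definition lx (l : proj_line F) (x1 : F) : F :=
  let: (a0, a1, a2) := val l in - (a0 + a1 * x1) / a2.
Definition Xl (l : proj_line F) := [set x1 | mkpt x1 (lx l x1) \in H].
Definition Kline (y u : F) := [set y + t * u | t in Ks F q].

Lemma mkpt_on l x1 : (val l).2 != 0 -> mkpt x1 (lx l x1) \in points_on l.
Proof.
case: l => [[[a0 a1] a2] hl] /= h2; rewrite inE /incident /= /lx /=.
apply/eqP; field; exact: h2.
Qed.

Lemma HL_eq l : (val l).2 != 0 ->
  H :&: points_on l = [set mkpt x1 (lx l x1) | x1 in Xl l].
Proof.
move=> h2; apply/setP => P; apply/idP/idP.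
- rewrite inE => /andP [hH hl].
  case: (pointP P) => [[x1 [x2 eP]] | [x2 eP] | eP].
  + have ex : x2 = lx l x1.
      move: hl; rewrite eP inE /incident /lx /=.
      case: l h2 => [[[a0 a1] a2] hn] /= h2 /eqP e.
      move: e; rewrite addrC => /eqP; rewrite addr_eq0 => /eqP e'.
      by apply: (mulIf h2); rewrite divfK // mulrC e' mulr1.
    apply/imsetP; exists x1; last by rewrite eP ex.
    by rewrite inE -ex -eP.
  + by move: hH; rewrite (negbTE (notH01 Hq2 eP)).
  + move: hl; rewrite eP inE /incident /=.
    case: l h2 => [[[a0 a1] a2] hn] /= h2.
    by rewrite !mulr0 !add0r mulr1 (negbTE h2).
- move=> /imsetP [x1 hx ->]; rewrite inE mkpt_on // andbT.
  by move: hx; rewrite inE.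
Qed.

Lemma card_HL l : (val l).2 != 0 -> #|H :&: points_on l| = #|Xl l|.
Proof.
move=> h2; rewrite HL_eq // card_in_imset //.
by move=> x y _ _ /mkpt_inj [].
Qed.

Lemma quad l y u : (val l).2 != 0 -> u != 0 -> (#|Kline y u :&: Xl l| <= 2)%N.
Proof.
case: l => [[[a0 a1] a2] hl] /= h2 hu.
set al := - a1 / a2; set be := - a0 / a2.
set al' := - a1 ^+ q / a2 ^+ q; set be' := - a0 ^+ q / a2 ^+ q.
set A := u * u ^+ q.
set B := al * u + al' * u ^+ q + y * u ^+ q + u * y ^+ q.
set C := al * y + be + al' * y ^+ q + be' + y * y ^+ q.
pose p : {poly F} := A *: 'X^2 + B *: 'X + C%:P.
have hA : A != 0 by rewrite mulf_neq0 // expf_neq0.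
have p0 : p != 0.
  apply/eqP => /(congr1 (fun r : {poly F} => r`_2)).
  rewrite /p coef0 !coefD !coefZ coefXn coefX coefC /= mulr1 mulr0 !addr0 => e.
  by move: hA; rewrite e eqxx.
have sp : (size p <= 3)%N.
  rewrite /p; apply: (leq_trans (size_add _ _)); rewrite geq_max; apply/andP; split.
    apply: (leq_trans (size_add _ _)); rewrite geq_max; apply/andP; split.
      by apply: (leq_trans (size_scale_leq _ _)); rewrite size_polyXn.
    by apply: (leq_trans (size_scale_leq _ _)); rewrite size_polyX.
  by apply: (leq_trans (size_polyC_leq1 _)).
have hr := card_roots_le p0.
have hr2 : (#|[set x | root p x]| <= 2)%N.
  by apply: (leq_trans hr); move: sp; case: (size p) => [|[|[|[|]]]].
set Q := [set t in Ks F q | y + t * u \in Xl (exist _ (a0, a1, a2) hl)].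
have sub1 : Kline y u :&: Xl (exist _ (a0, a1, a2) hl) \subset [set y + t * u | t in Q].
  apply/subsetP => x; rewrite inE => /andP [/imsetP [t ht ->] hx].
  by apply/imsetP; exists t => //; rewrite inE ht hx.
apply: (leq_trans (subset_leq_card sub1)); apply: (leq_trans (leq_imset_card _ _)).
apply: (leq_trans _ hr2); apply: subset_leq_card; apply/subsetP => t.
rewrite !inE => /andP [ht hx]; move: ht => /eqP ht.
move: hx; rewrite /lx /= expr1n !mulr1 => /eqP hx.
rewrite /root /p !hornerD !hornerZ hornerXn hornerX hornerC; apply/eqP; rewrite -[RHS]hx.
rewrite [(y + t * u) ^+ q.+1]exprS !exprMn !(frobN Hadd Hq2) !exprVn !Hadd !exprMn !Hadd !exprMn ht.
rewrite /A /B /C /al /be /al' /be'.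
move: (y ^+ q) (u ^+ q) (a1 ^+ q) (a0 ^+ q) (a2 ^+ q)^-1 (a2^-1) => Yq Uq A1 A0 I2 I1.
ring.
Qed.

End Lines.


Lemma card_offdiag (T : finType) (A : {set T}) :
  #|[set w : T * T | [&& w.1 \in A, w.2 \in A & w.1 != w.2]]| = (#|A| * (#|A|).-1)%N.
Proof.
have -> : [set w : T * T | [&& w.1 \in A, w.2 \in A & w.1 != w.2]] =
  setX A A :\: [set (x, x) | x in A].
  apply/setP => [[a b]]; rewrite !inE /=.
  case ha: (a \in A); case hb: (b \in A); rewrite ?andbF ?andbT //=.
  apply/idP/idP => [ab|].
    apply/negP => /imsetP [x _ [e1 e2]]; by move: ab; rewrite e1 e2 eqxx.
  move=> h; apply/negP => /eqP e; move/negP: h; apply.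
  by apply/imsetP; exists a => //; rewrite e.
rewrite cardsD cardsX.
have -> : setX A A :&: [set (x, x) | x in A] = [set (x, x) | x in A].
  apply/setIidPr; apply/subsetP => _ /imsetP [x hx ->]; by rewrite inE /= hx.
rewrite card_imset; last by move=> x y [].
by rewrite -subn1 mulnBr muln1.
Qed.

Section Count.
Variables (F : finFieldType) (q : nat).
Hypothesis Hadd : forall x y : F, (x + y) ^+ q = x ^+ q + y ^+ q.
Hypothesis Hinv : forall x : F, (x ^+ q) ^+ q = x.
Hypothesis Hq2 : (2 <= q)%N.
Hypothesis HF : #|F| = (q * q)%N.

Definition Jset : {set F * F} := setX [set: F] [set~ 0].

Lemma card_Jset : #|Jset| = (q * q * (q * q).-1)%N.
Proof. by rewrite cardsX cardsT cardsC1 HF. Qed.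

Lemma half_good (X : {set F}) : #|X| = q.+1 ->
  (forall y u, u != 0 -> (#|Kline q y u :&: X| <= 2)%N) ->
  (#|Jset| <= 2 * #|[set i in Jset | 2 <= #|Kline q i.1 i.2 :&: X|]|)%N.
Proof.
move=> cX h2.
set G := [set i in Jset | _].
set O1 := [set w : F * F | [&& w.1 \in X, w.2 \in X & w.1 != w.2]].
set O2 := [set w : F * F | [&& w.1 \in Ks F q, w.2 \in Ks F q & w.1 != w.2]].
pose iota (w : (F * F) * (F * F)) :=
  let: ((x, x'), (t, t')) := w in
  let u := (x' - x) / (t' - t) in ((x - t * u, u), (enum_rank x < enum_rank x')%N).
have cD : #|setX O1 O2| = #|Jset|.
  rewrite cardsX !card_offdiag cX (card_Ks_eq Hadd Hinv Hq2 HF) card_Jset.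
  case: q Hq2 => [|n] // _; rewrite /=; nia.
have memK : forall (x x' t t' : F), x != x' -> t != t' ->
   let u := (x' - x) / (t' - t) in
   [/\ u != 0, x - t * u + t * u = x & x - t * u + t' * u = x'].
  move=> x x' t t' hx ht u; split.
  - by rewrite mulf_neq0 // ?invr_eq0 subr_eq0 // eq_sym.
  - by rewrite subrK.
  - have htt : t' - t != 0 by rewrite subr_eq0 eq_sym.
    by rewrite /u; field.
have hinj : {in setX O1 O2 &, injective iota}.
  move=> [[x1 x1'] [t1 t1']] [[x2 x2'] [t2 t2']].
  rewrite !inE /= => /andP [/and3P [hx1 hx1' n1] /and3P [ht1 ht1' m1]]
    /andP [/and3P [hx2 hx2' n2] /and3P [ht2 ht2' m2]].
  have [u1n0 e1 e1'] := memK _ _ _ _ n1 m1.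
  have [u2n0 e2 e2'] := memK _ _ _ _ n2 m2.
  move: e1 e1' e2 e2'.
  set u1 := (x1' - x1) / (t1' - t1); set u2 := (x2' - x2) / (t2' - t2).
  set y1 := x1 - t1 * u1; set y2 := x2 - t2 * u2.
  move=> e1 e1' e2 e2' [ey eu eb].
  rewrite -ey -eu in e2 e2'.
  set S := Kline q y1 u1 :&: X.
  have inS : forall t x, t ^+ q == t -> x \in X -> y1 + t * u1 = x -> x \in S.
    move=> t x ht hx e; rewrite inE hx andbT; apply/imsetP; exists t => //.
    by rewrite inE.
  have s1 := inS _ _ ht1 hx1 e1; have s1' := inS _ _ ht1' hx1' e1'.
  have s2 := inS _ _ ht2 hx2 e2; have s2' := inS _ _ ht2' hx2' e2'.
  have cS := h2 y1 u1 u1n0.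
  have three : forall z, z \in S -> z = x1 \/ z = x1'.
    move=> z hz; case: (eqVneq z x1) => [->|nz1]; first by left.
    case: (eqVneq z x1') => [->|nz1']; first by right.
    have : (size [:: x1; x1'; z] <= #|S|)%N.
      rewrite cardE; apply: uniq_leq_size.
        by rewrite /= !inE negb_or n1 eq_sym nz1 eq_sym nz1'.
      by move=> w; rewrite !inE => /or3P [] /eqP ->; rewrite mem_enum.
    by move=> h; move: (leq_trans h cS).
  have tinj : forall t t', y1 + t * u1 = y1 + t' * u1 -> t = t'.
    by move=> t t' /addrI /(mulIf u1n0).
  have [ex2 ex2'] : x2 = x1 /\ x2' = x1'.
    case: (three _ s2) => ex2; case: (three _ s2') => ex2'.
    - by move: n2; rewrite ex2 ex2' eqxx.
    - by split.
    - exfalso; move: eb; rewrite ex2 ex2'.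
      have : enum_rank x1 != enum_rank x1' by rewrite (inj_eq enum_rank_inj).
      move=> hne; case: (ltngtP (enum_rank x1) (enum_rank x1')) => // e.
      by move: hne; rewrite (val_inj e) eqxx.
    - by move: n2; rewrite ex2 ex2' eqxx.
  have et := tinj t1 t2 (etrans e1 (esym (etrans e2 ex2))).
  have et' := tinj t1' t2' (etrans e1' (esym (etrans e2' ex2'))).
  by rewrite ex2 ex2' et et'.
have hsub : iota @: setX O1 O2 \subset setX G [set: bool].
  apply/subsetP => _ /imsetP [[[x x'] [t t']] hw ->].
  move: hw; rewrite !inE /= => /andP [/and3P [hx hx' n] /and3P [ht ht' m]].
  have [un0 e e'] := memK _ _ _ _ n m.
  rewrite andbT un0 /=.
  set u := (x' - x) / (t' - t) in un0 e e' *.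
  apply: (@leq_trans #|[set x; x']|); first by rewrite cards2 n.
  apply: subset_leq_card; apply/subsetP => z; rewrite !inE => /orP [] /eqP ->.
  - by rewrite hx andbT; apply/imsetP; exists t; rewrite ?inE.
  - by rewrite hx' andbT; apply/imsetP; exists t'; rewrite ?inE.
have := subset_leq_card hsub; rewrite (card_in_imset hinj) cD [#|setX G _|]cardsX cardsT card_bool.
by rewrite mulnC.
Qed.

End Count.

Local Close Scope ring_scope.

Lemma card_setI_sum (T : finType) (B G : {set T}) :
  #|B :&: G| = \sum_(b in B) (b \in G : nat).
Proof.
rewrite [RHS](big_setID G) /=.
rewrite [X in _ = (_ + X)%N]big1 ?addn0; last first.
  by move=> i; rewrite inE => /andP [/negbTE -> _].
rewrite -sum1_card; apply: eq_bigr => i; by rewrite inE => /andP [_ ->].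
Qed.

Lemma greedy (I Bt : finType) (J : {set I}) (good : I -> Bt -> bool) (k : nat) (B : {set Bt}) :
  (0 < #|J|)%N ->
  (forall b, b \in B -> (#|J| <= 2 * #|J :&: [set i | good i b]|)%N) ->
  (#|B| < 2 ^ k)%N ->
  exists s : seq I, (size s <= k)%N /\ forall b, b \in B -> exists2 i, i \in s & good i b.
Proof.
move=> hJ; elim: k B => [|k IH] B hB hk.
  move: hk; rewrite expn0 ltnS leqn0 => /eqP/cards0_eq ->.
  by exists [::]; split => // b; rewrite inE.
pose c i := #|B :&: [set b | good i b]|.
have dc : (\sum_(i in J) c i = \sum_(b in B) #|J :&: [set i | good i b]|)%N.
  rewrite /c.
  under eq_bigr do rewrite card_setI_sum.
  rewrite exchange_big /=; apply: eq_bigr => b _.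
  rewrite card_setI_sum; apply: eq_bigr => i _; by rewrite !inE.
have [i0 hi0] : exists i0, i0 \in J by apply/card_gt0P.
pose im := [arg max_(i > i0 in J) c i].
have [him hmax] : im \in J /\ forall i, i \in J -> (c i <= c im)%N.
  rewrite /im; case: arg_maxnP => // j hj hm; split => // i hi; exact: hm.
have h1 : (#|B| * #|J| <= 2 * \sum_(i in J) c i)%N.
  rewrite dc big_distrr /= -sum_nat_const; apply: leq_sum => b hb; exact: hB.
have h2 : (\sum_(i in J) c i <= #|J| * c im)%N.
  rewrite -sum_nat_const; apply: leq_sum => i hi; exact: hmax.
have h3 : (#|B| <= 2 * c im)%N.
  have : (#|B| * #|J| <= 2 * c im * #|J|)%N.
    apply: leq_trans h1 _; by rewrite -mulnA [(c im * _)%N]mulnC leq_mul2l h2 orbT.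
  by rewrite leq_pmul2r.
set B' := B :\: [set b | good im b].
have cB : (#|B :&: [set b | good im b]| + #|B'| = #|B|)%N by rewrite cardsID.
have hk' : (#|B'| < 2 ^ k)%N.
  move: hk; rewrite expnS; rewrite /c in h3; lia.
have hB' : forall b, b \in B' -> (#|J| <= 2 * #|J :&: [set i | good i b]|)%N.
  by move=> b; rewrite inE => /andP [_ /hB].
have [s [ss hs]] := IH B' hB' hk'.
exists (im :: s); split; first by [].
move=> b hb; case hg: (good im b).
  by exists im; rewrite ?inE ?eqxx.
have : b \in B' by rewrite inE hb andbT inE hg.
move=> /hs [i hi hgi]; exists i => //; by rewrite inE hi orbT.
Qed.

Lemma pad (T : finType) (A C : {set T}) (n : nat) :
  A \subset C -> (#|A| <= n <= #|C|)%N -> exists D : {set T}, [/\ A \subset D, D \subset C & #|D| = n].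
Proof.
move=> hAC /andP [h1 h2].
have [d hd] : exists d, n = (#|A| + d)%N by exists (n - #|A|)%N; lia.
rewrite hd in h2 *; clear hd h1 n.
elim: d h2 => [|d IH] h2; first by exists A; rewrite addn0.
have h2' : (#|A| + d <= #|C|)%N by lia.
have [D [hAD hDC cD]] := IH h2'.
have : D \proper C.
  by rewrite properEcard hDC cD -addnS.
case/properP => _ [x hxC hxD].
exists (x |: D); split.
- by apply: subset_trans hAD (subsetUr _ _).
- by rewrite subUset sub1set hxC hDC.
- by rewrite cardsU1 hxD cD addnS.
Qed.

Local Open Scope ring_scope.

Lemma card_bigcup_seq (T I : finType) (s : seq I) (G : I -> {set T}) (m : nat) :
  (forall i, (#|G i| <= m)%N) -> (#|\bigcup_(i <- s) G i| <= size s * m)%N.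
Proof.
move=> hG; elim: s => [|i s IH]; first by rewrite big_nil cards0.
rewrite big_cons /= mulSn; apply: (leq_trans (n := #|G i| + #|\bigcup_(j <- s) G j|)).
  by rewrite cardsU leq_subr.
by apply: leq_add.
Qed.

Section Comb.
Variables (F : finFieldType) (q : nat).
Hypothesis Hadd : forall x y : F, (x + y) ^+ q = x ^+ q + y ^+ q.
Hypothesis Hinv : forall x : F, (x ^+ q) ^+ q = x.
Hypothesis Hq2 : (2 <= q)%N.
Hypothesis HF : #|F| = (q * q)%N.

Local Notation H := (hermitian_curve F q).

Lemma card_H : (q * q * q <= #|H|)%N.
Proof.
pose f (w : F * F) := mkpt w.1 (sec q w.1 + w.2).
have finj : injective f.
  by move=> [a b] [c d] /mkpt_inj /= [-> /addrI ->].
have e : (q * q * q = #|[set: F]| * #|Kern F q|)%N.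
  by rewrite cardsT HF (card_Kern_eq Hadd Hinv Hq2 HF).
rewrite e -cardsX -(card_imset _ finj).
apply: subset_leq_card; apply/subsetP => _ /imsetP [[a b] hw ->].
have hb : b ^+ q + b = 0 by move: hw; rewrite !inE /= => /eqP.
rewrite /f /= mkpt_H.
have := secP Hadd Hinv Hq2 HF a; rewrite /Tr => hs.
rewrite Hadd; apply/eqP.
have -> : sec q a + b + (sec q a ^+ q + b ^+ q) + a ^+ q.+1 =
          (sec q a + sec q a ^+ q) + a ^+ q.+1 + (b ^+ q + b) by ring.
by rewrite hs hb addNr addr0.
Qed.

Lemma comb (k : nat) : (#|[set: proj_line F]| < 2 ^ k)%N ->
  exists D0 : {set proj_point F}, two_blocking_set q D0 /\
    (#|D0| <= 1 + q * q + k * (q * q))%N.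
Proof.
move=> hk.
set Bs := [set l : proj_line F | secant_line q l && ((val l).2 != 0)].
pose good (i : F * F) (l : proj_line F) := (2 <= #|Kline q i.1 i.2 :&: Xl q l|)%N.
have hJ : (0 < #|Jset F|)%N.
  rewrite (card_Jset HF); case: q Hq2 => [|[|n]] //= _; rewrite !muln_gt0 /=; nia.
have hB : forall l, l \in Bs -> (#|Jset F| <= 2 * #|Jset F :&: [set i | good i l]|)%N.
  move=> l; rewrite inE => /andP [/eqP hs h2].
  have := half_good Hadd Hinv Hq2 HF (X := Xl q l).
  have -> : [set i in Jset F | (2 <= #|Kline q i.1 i.2 :&: Xl q l|)%N] = Jset F :&: [set i | good i l].
    by apply/setP => i; rewrite !inE.
  apply.
    by rewrite -(card_HL Hq2) // hs.
  by move=> y u hu; apply: (quad Hadd Hq2).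
have hBk : (#|Bs| < 2 ^ k)%N.
  by apply: leq_ltn_trans hk; apply: subset_leq_card; apply: subsetT.
have [s [ss hs]] := greedy hJ hB hBk.
set Sec := [set secpt q x | x in [set: F]].
set U := \bigcup_(i <- s) Piece q (Kline q i.1 i.2).
exists (inf F |: (Sec :|: U)); split; last first.
  rewrite cardsU1 -addnA; apply: leq_add; first by case: (_ \notin _).
  rewrite cardsU; apply: (leq_trans (leq_subr _ _)); apply: leq_add.
    by apply: (leq_trans (leq_imset_card _ _)); rewrite cardsT HF.
  apply: leq_trans (leq_mul ss (leqnn _)).
  apply: card_bigcup_seq => i.
  apply: (leq_trans (card_Piece Hadd Hinv Hq2 HF _)); rewrite leq_mul2r; apply/orP; right.
  by apply: (leq_trans (leq_imset_card _ _)); rewrite (card_Ks_eq Hadd Hinv Hq2 HF).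
split.
  rewrite subUset sub1set (inf_H F Hq2) /= subUset; apply/andP; split.
    by apply/subsetP => _ /imsetP [x _ ->]; apply: (secpt_H Hadd Hinv Hq2 HF).
  rewrite /U bigcup_seq; apply/bigcupsP => i _; apply/subsetP => P; rewrite inE.
  by case/andP.
move=> l hsec.
case: (eqVneq (val l).2 0) => h2; last first.
  have hl : l \in Bs by rewrite inE hsec h2.
  have [i hi hg] := hs l hl.
  set S := Kline q i.1 i.2 :&: Xl q l in hg.
  have sub : [set mkpt x (lx l x) | x in S] \subset (inf F |: (Sec :|: U)) :&: points_on l.
    apply/subsetP => _ /imsetP [x hx ->]; rewrite inE mkpt_on // andbT.
    rewrite !inE; apply/orP; right; apply/orP; right.
    rewrite /U bigcup_seq; apply/bigcupP; exists i => //.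
    move: hx; rewrite in_setI => /andP [hK hX]; rewrite /Piece in_set /= hK eqxx !andbT.
    by move: hX; rewrite in_set.
  apply: leq_trans (subset_leq_card sub); rewrite card_in_imset //.
  by move=> x y _ _ /mkpt_inj [].
move: l hsec h2 => [[[a0 a1] a2] hn] hsec /= h2; subst a2.
case: (eqVneq a1 0) => h1.
  exfalso; have := hn; rewrite h1 /normalized => /or3P [/eqP e0 | | ]; last first.
  - by case/and3P => _ _; rewrite eq_sym oner_eq0.
  - by case/andP => _; rewrite eq_sym oner_eq0.
  move: hsec; rewrite /secant_line.
  set l := exist _ _ _.
  have : H :&: points_on l \subset [set inf F].
    apply/subsetP => P; rewrite in_setI in_set1 => /andP [hH]; rewrite /points_on in_set.
    case: (pointP P) => [[x1 [x2 eP]] | [x2 eP] | eP].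
    - by rewrite eP /incident /= h1 e0 mul1r !mul0r !addr0 oner_eq0.
    - by move: hH; rewrite (negbTE (notH01 Hq2 eP)).
    - by rewrite eP.
  move=> /subset_leq_card; rewrite cards1 => h /eqP e; move: h; rewrite e.
  by case: q Hq2.
set l := exist _ _ _.
have sub : [set inf F; secpt q (- a0 / a1)] \subset (inf F |: (Sec :|: U)) :&: points_on l.
  apply/subsetP => P; rewrite !inE => /orP [] /eqP ->.
    by rewrite eqxx /= /incident /= !mulr0 mulr1 !add0r.
  rewrite imset_f ?inE ?orbT //= /incident /=; apply/eqP; field; exact: h1.
apply: leq_trans (subset_leq_card sub).
rewrite cards2; case: eqP => //= e.
by move: e => /(congr1 (fun P : proj_point F => (val P).1.1)) /= /eqP; rewrite eq_sym oner_eq0.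
Qed.

End Comb.

End HC.

From mathcomp Require Import all_classical all_reals all_analysis.
Import Order.TTheory GRing.Theory Num.Theory.
Local Open Scope ring_scope.

Lemma real_part (R : realType) (q r m : nat) :
  (2 <= q)%N -> (1 < r)%N -> (2 ^ m.-1 < q)%N -> (0 < m)%N ->
  (r%:R : R) < Num.sqrt (q%:R) / 2 - (2 * log2 (q%:R : R) + 1) / 4 ->
  [/\ (1 + q * q + (6 * m).+1 * (q * q))%:R <=
       (q%:R ^+ 3 - 3 * q%:R ^+ 2 - 2 * q%:R) / r%:R + 2 * q%:R ^+ 2
       + q%:R + 2 + 2 * (Num.ceil (log2 (q%:R : R) + 1))%:~R :> R,
      (q%:R ^+ 3 - 3 * q%:R ^+ 2 - 2 * q%:R) / r%:R + 2 * q%:R ^+ 2 - q%:R + 2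
       - 2 * (Num.ceil (log2 (q%:R : R) + 1))%:~R + 1 <=
      (q%:R ^+ 3 - 3 * q%:R ^+ 2 - 2 * q%:R) / r%:R + 2 * q%:R ^+ 2
       + q%:R + 2 + 2 * (Num.ceil (log2 (q%:R : R) + 1))%:~R :> R,
      (q%:R ^+ 3 - 3 * q%:R ^+ 2 - 2 * q%:R) / r%:R + 2 * q%:R ^+ 2 - q%:R + 2
       - 2 * (Num.ceil (log2 (q%:R : R) + 1))%:~R + 1 <= (q * q * q)%:R :> R,
      1 <= (q%:R ^+ 3 - 3 * q%:R ^+ 2 - 2 * q%:R) / r%:R + 2 * q%:R ^+ 2
       + q%:R + 2 + 2 * (Num.ceil (log2 (q%:R : R) + 1))%:~R :> R
    & (1 <= q * q * q)%N].
Proof.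
move=> hq hr1 hm1 hm0 hr.
set Q : R := q%:R; set rR : R := r%:R.
set L := log2 Q.
set c : R := (Num.ceil (L + 1))%:~R.
have hln2 : 0 < ln (2 : R) by apply: ln_gt0; lra.
have hQ2 : 2 <= Q by rewrite /Q ler_nat.
have hr2 : 2 <= rR by rewrite /rR ler_nat.
have hL0 : 0 <= L by rewrite /L /log2; apply: divr_ge0; [apply: ln_ge0; lra | exact: ltW].
have hc : L + 1 <= c by apply: ceil_ge.
set s := Num.sqrt Q.
have hs0 : 0 <= s by apply: sqrtr_ge0.
have hs2 : s ^+ 2 = Q by apply: sqr_sqrtr; lra.
have {}hr : rR < s / 2 - (2 * L + 1) / 4 by exact: hr.
have hs4 : 4 < s by lra.
have hQ16 : 16 < Q by nra.
have hL4 : 4 < L.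
  rewrite /L /log2 ltr_pdivlMr //.
  have -> : 4 * ln (2 : R) = ln (2 ^+ 4) by rewrite lnXn ?mulr_natl //; lra.
  by rewrite ltr_ln ?posrE //; lra.
have hmL : m%:R < L + 1 :> R.
  have h1 : (2 ^ m.-1)%:R < Q by rewrite /Q ltr_nat.
  have h2 : (m.-1)%:R < L.
    rewrite /L /log2 ltr_pdivlMr // mulr_natl -lnXn; last lra.
    rewrite ltr_ln ?posrE; first by rewrite -natrX.
      by apply: exprn_gt0; lra.
    lra.
  by rewrite -(prednK hm0) -addn1 natrD; lra.
have key : rR * (8 * L + 4) < Q.
  have h1 : rR * (8 * L + 4) < (s / 2 - (2 * L + 1) / 4) * (8 * L + 4).
    by rewrite ltr_pM2r //; lra.
  apply: (lt_le_trans h1).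
  have : 0 <= (s - (2 * L + 1)) ^+ 2 by apply: sqr_ge0.
  rewrite -hs2; nra.
set Z := (Q ^+ 3 - 3 * Q ^+ 2 - 2 * Q) / rR.
have rR0 : rR != 0 by apply/eqP; lra.
have hZ : Z * rR = Q ^+ 3 - 3 * Q ^+ 2 - 2 * Q by rewrite /Z divfK.
have hnum : 0 <= Q ^+ 3 - 3 * Q ^+ 2 - 2 * Q by nra.
have hZ0 : 0 <= Z by rewrite /Z divr_ge0 //; lra.
have hZlow : Q ^+ 2 * (8 * L + 4) - (3 * Q ^+ 2 + 2 * Q) / 2 <= Z.
  rewrite -(ler_pM2r (_ : 0 < rR)); last lra.
  rewrite hZ.
  have : rR * (8 * L + 4) * Q ^+ 2 <= Q * Q ^+ 2.
    by rewrite ler_pM2r ?exprn_gt0 //; lra.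
  nra.
have hZup : Z <= Q ^+ 3 / 2.
  have : Z * 2 <= Z * rR by apply: ler_wpM2l.
  have : 0 <= 3 * Q ^+ 2 + 2 * Q by nra.
  rewrite hZ => h1 h; lra.
have hM6 : (1 + q * q + (6 * m).+1 * (q * q))%:R = 1 + Q ^+ 2 + (6 * m%:R + 1) * Q ^+ 2 :> R.
  by rewrite /Q -[(6 * m).+1]addn1 !natrD !natrM; ring.
rewrite hM6 -/c -/L -/Z.
have hQ3 : (q * q * q)%:R = Q ^+ 3 :> R by rewrite !natrM /Q; ring.
rewrite hQ3; split.
- have : 0 <= Q ^+ 2 * (2 * L - 4) by apply: mulr_ge0; nra.
  have : (6 * m%:R + 1) * Q ^+ 2 <= (6 * L + 7) * Q ^+ 2 by rewrite ler_pM2r ?exprn_gt0 //; nra.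
  nra.
- lra.
- have : 0 <= L + 1 by lra.
  nra.
- nra.
- have q0 : (0 < q)%N by apply: leq_trans hq.
  by rewrite !muln_gt0 q0.
Qed.


Theorem mainTheorem9 (R : realType) (F : finFieldType) (q r : nat) :
  (exists p n : nat, prime p /\ q = (p ^ n.+1)%N) ->
  odd q ->
  #|F| = (q ^ 2)%N ->
  (r %| q.-1)%N ->
  (1 < r)%N ->
  (r%:R : R) < Num.sqrt (q%:R) / 2 - (2 * log2 (q%:R : R) + 1) / 4 ->
  exists D : {set proj_point F},
    two_blocking_set q D /\
    ((q%:R ^+ 3 - 3 * q%:R ^+ 2 - 2 * q%:R) / r%:R + 2 * q%:R ^+ 2 - q%:R + 2
       - 2 * (Num.ceil (log2 (q%:R : R) + 1))%:~R <= (#|D|%:R : R)) /\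
    ((#|D|%:R : R) <= (q%:R ^+ 3 - 3 * q%:R ^+ 2 - 2 * q%:R) / r%:R + 2 * q%:R ^+ 2
       + q%:R + 2 + 2 * (Num.ceil (log2 (q%:R : R) + 1))%:~R).
Proof.
move=> [p [n [pp eqq]]] _ HF2 _ r1 hr.
have Hq2 : (2 <= q)%N.
  rewrite eqq; apply: (@leq_trans p); first exact: prime_gt1.
  by rewrite expnS; apply: leq_pmulr; rewrite expn_gt0 prime_gt0.
have HF : #|F| = (q * q)%N by rewrite HF2 mulnn.
have hp : p \in [pchar F].
  apply: (@card_finPcharP F p (n.+1 * 2)) => //; by rewrite HF2 eqq -expnM.
have hnat : [pchar F].-nat q by rewrite eqq pnatX pnatE // hp.
have Hadd : forall x y : F, (x + y) ^+ q = x ^+ q + y ^+ q.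
  by move=> x y; apply: exprDn_pchar.
have Hinv : forall x : F, (x ^+ q) ^+ q = x.
  by move=> x; rewrite -exprM -HF expf_card.
set m := up_log 2 q.
have hm1 : (2 ^ m.-1 < q)%N by apply: up_log_gtn.
have hm0 : (0 < m)%N by rewrite up_log_gt0 Hq2.
have hmq : (q <= 2 ^ m)%N by apply: up_logP.
have hk : (#|[set: proj_line F]| < 2 ^ (6 * m).+1)%N.
  rewrite cardsT card_sig; apply: (leq_ltn_trans (max_card _)).
  have e2 : (2 ^ (6 * m).+1 = 2 * (2 ^ m) ^ 6)%N by rewrite -expnM [(m * 6)%N]mulnC expnS.
  rewrite !card_prod HF e2.
  have h6 : (q * q * (q * q) * (q * q) <= (2 ^ m) ^ 6)%N.
    have e : ((2 ^ m) ^ 6 = 2 ^ m * 2 ^ m * (2 ^ m * 2 ^ m) * (2 ^ m * 2 ^ m))%N.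
      by rewrite !expnS expn0 muln1 !mulnA.
    by rewrite e; repeat apply: leq_mul => //.
  apply: (leq_ltn_trans h6).
  by apply: ltn_Pmull => //; rewrite !expn_gt0.
have [D0 [[D0H D0bl] cD0]] := HC.comb Hadd Hinv Hq2 HF hk.
have cH := HC.card_H Hadd Hinv Hq2 HF.
have [hU hLU hLH h1U q3] := real_part R q r m Hq2 r1 hm1 hm0 hr.
set Lb := (_ - _ * (Num.ceil _)%:~R) in hLU hLH *.
set Ub := (_ + _ * (Num.ceil _)%:~R) in hU hLU h1U *.
set M := (Num.truncn Lb).+1.
have hMlt : Lb < M%:R by apply: truncnS_gt.
have [hMU hMH] : M%:R <= Ub /\ (M <= q * q * q)%N.
  case: (lerP 0 Lb) => hL.
    have hM : M%:R <= Lb + 1.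
      by rewrite /M -addn1 natrD lerD2r truncn_le.
    split; first by apply: le_trans hM hLU.
    by rewrite -(ler_nat R); apply: le_trans hM hLH.
  have -> : M = 1%N.
    rewrite /M; congr S; apply/truncn0Pn; rewrite -ltNge.
    by apply: lt_trans hL _; rewrite ltr01.
  by [].
set N := maxn #|D0| M.
have hD0U : (#|D0|%:R : R) <= Ub.
  apply: le_trans hU; by rewrite ler_nat.
have [D [hD0D hDH cD]] : exists D : {set proj_point F}, [/\ D0 \subset D, D \subset hermitian_curve F q & #|D| = N].
  apply: (HC.pad (n := N) D0H); rewrite leq_maxl /= geq_max (subset_leq_card D0H) /=.
  exact: leq_trans hMH cH.
exists D; split; first split => //.
  move=> l hl; apply: leq_trans (D0bl l hl) _.
  by apply: subset_leq_card; apply: finset.setSI.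
rewrite cD; case: (leqP #|D0| M) => hh.
  have -> : N = M by apply/maxn_idPr.
  split; [exact: ltW | exact: hMU].
have -> : N = #|D0| by apply/maxn_idPl; exact: ltnW.
split => //.
apply: le_trans (ltW hMlt) _; rewrite ler_nat; exact: ltnW.
Qed.
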